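(* Let $N\ge1$ and $k>0$ with $\#\mathcal O^\times\mid k$. If $D_K=4$, $D_K=8$, or $D_K\equiv3\pmod 4$ is prime, then $J^{\rm spez}_{k,1}(N)=J_{k,1}(N)$.
   Context: $K$ is an imaginary quadratic field of class number one with discriminant $-D_K$, ring of integers $\mathcal O$, $N(a)=a\bar a$, $\mathcal D^{-1}=\mathcal O/\sqrt{-D_K}$, $e[z]=e^{2\pi iz}$. $J_{k,1}(N)$ is the space of Hermitian Jacobi forms of weight $k$, index $1$ and level $N$: holomorphic $\varphi:\mathbf H\times\mathbf C^2\to\mathbf C$ such that (a) for all $\epsilon\in\mathcal O^\times$ and $\begin{pmatrix}a&b\\ c&d\end{pmatrix}\in\Gamma_0(N)$: $(c\tau+d)^{-k}e[-\frac{czw}{c\tau+d}]\varphi(\frac{a\tau+b}{c\tau+d},\frac{\epsilon z}{c\tau+d},\frac{\bar\epsilon w}{c\tau+d})=\varphi(\tau,z,w)$; (b) for all $\lambda,\mu\in\mathcal O$: $e[N(\lambda)\tau+\bar\lambda z+\lambda w]\varphi(\tau,z+\lambda\tau+\mu,w+\bar\lambda\tau+\bar\mu)=\varphi(\tau,z,w)$; (c) for each $M\in\mathrm{SL}_2(\mathbf Z)$ the transform of $\varphi$ by $M$ as in (a) (with $\epsilon=1$) has an expansion $\sum_{\ell\ge0,t\in\mathcal D^{-1},\nu N(t)\le\ell}c^M(\ell,t)e[\frac\ell\nu\tau+\bar tz+tw]$ with $\nu\in\mathbf Z_{>0}$, $\nu=1$ for $M=I_2$; $c_\varphi(\ell,t):=c^{I_2}(\ell,t)$.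 $J^{\rm spez}_{k,1}(N)$ is the subspace of $\varphi$ whose coefficients $c_\varphi(\ell,t)$ depend only on $\ell-N(t)$. *)

(* Defs.v *)
From Stdlib Require Import Reals ZArith Znumtheory List Lia.
Open Scope R_scope.

Definition Cx : Type := (R * R)%type.
Definition Re (z : Cx) : R := fst z.
Definition Im (z : Cx) : R := snd z.
Definition RtoC (x : R) : Cx := (x, 0).
Definition ZtoC (n : Z) : Cx := (IZR n, 0).
Definition C0 : Cx := (0, 0).
Definition C1 : Cx := (1, 0).
Definition Cadd (z w : Cx) : Cx := (Re z + Re w, Im z + Im w).
Definition Copp (z : Cx) : Cx := (- Re z, - Im z).
Definition Csub (z w : Cx) : Cx := Cadd z (Copp w).
Definition Cmul (z w : Cx) : Cx :=
  (Re z * Re w - Im z * Im w, Re z * Im w + Im z * Re w).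
Definition Cnorm2 (z : Cx) : R := Re z * Re z + Im z * Im z.
Definition Cabs (z : Cx) : R := sqrt (Cnorm2 z).
Definition Cinv (z : Cx) : Cx := (Re z / Cnorm2 z, - Im z / Cnorm2 z).
Definition Cdiv (z w : Cx) : Cx := Cmul z (Cinv w).
Definition Cconj (z : Cx) : Cx := (Re z, - Im z).
Fixpoint Cpow (z : Cx) (n : nat) : Cx :=
  match n with O => C1 | S m => Cmul z (Cpow z m) end.

(** e[z] = exp(2 pi i z) *)
Definition ee (z : Cx) : Cx :=
  (exp (- 2 * PI * Im z) * cos (2 * PI * Re z),
   exp (- 2 * PI * Im z) * sin (2 * PI * Re z)).

Definition Cconv (u : nat -> Cx) (L : Cx) : Prop :=
  Un_cv (fun n => Re (u n)) (Re L) /\ Un_cv (fun n => Im (u n)) (Im L).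

(** * The field K = Q(sqrt(-D)), D = D_K > 0 *)
Definition sqrtmD (D : Z) : Cx := (0, sqrt (IZR D)).
(** omega = (-D + sqrt(-D))/2, so that O = Z + Z omega *)
Definition omega (D : Z) : Cx := (- IZR D / 2, sqrt (IZR D) / 2).
Definition elt (D : Z) (a b : Z) : Cx := Cadd (ZtoC a) (Cmul (ZtoC b) (omega D)).
Definition in_O (D : Z) (z : Cx) : Prop := exists a b : Z, z = elt D a b.
Definition is_unit (D : Z) (z : Cx) : Prop := z <> C0 /\ in_O D z /\ in_O D (Cinv z).
(** inverse different D^{-1} = O / sqrt(-D) *)
Definition in_Ddual (D : Z) (t : Cx) : Prop :=
  exists x, in_O D x /\ t = Cdiv x (sqrtmD D).
Definition t_of (D : Z) (a b : Z) : Cx := Cdiv (elt D a b) (sqrtmD D).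

Definition is_ideal (D : Z) (I : Cx -> Prop) : Prop :=
  (forall x, I x -> in_O D x) /\ I C0 /\
  (forall x y, I x -> I y -> I (Cadd x y)) /\
  (forall r x, in_O D r -> I x -> I (Cmul r x)).
Definition class_number_one (D : Z) : Prop :=
  forall I, is_ideal D I ->
    exists g, in_O D g /\ forall x, I x <-> exists y, in_O D y /\ x = Cmul g y.

Definition units_card_divides (D : Z) (k : nat) : Prop :=
  exists l : list Cx, NoDup l /\ (forall z, In z l <-> is_unit D z) /\
    Nat.divide (length l) k.

Definition upper (tau : Cx) : Prop := 0 < Im tau.

Definition Cdiff_at (f : Cx -> Cx) (z : Cx) : Prop :=
  exists L : Cx, forall eps, 0 < eps -> exists del, 0 < del /\
    forall h, h <> C0 -> Cabs h < del ->
      Cabs (Csub (Cdiv (Csub (f (Cadd z h)) (f z)) h) L) < eps.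

(** holomorphic = continuous and holomorphic in each variable separately (Osgood) *)
Definition holomorphic_HCC (phi : Cx -> Cx -> Cx -> Cx) : Prop :=
  forall tau z w, upper tau ->
    (forall eps, 0 < eps -> exists del, 0 < del /\
       forall tau' z' w', Cabs (Csub tau' tau) < del -> Cabs (Csub z' z) < del ->
         Cabs (Csub w' w) < del -> Cabs (Csub (phi tau' z' w') (phi tau z w)) < eps) /\
    Cdiff_at (fun t => phi t z w) tau /\
    Cdiff_at (fun t => phi tau t w) z /\
    Cdiff_at (fun t => phi tau z t) w.

Definition slash (k : nat) (a b c d : Z) (eps : Cx) (phi : Cx -> Cx -> Cx -> Cx)
  (tau z w : Cx) : Cx :=
  let j := Cadd (Cmul (ZtoC c) tau) (ZtoC d) in
  Cmul (Cmul (Cinv (Cpow j k))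
             (ee (Copp (Cdiv (Cmul (Cmul (ZtoC c) z) w) j))))
       (phi (Cdiv (Cadd (Cmul (ZtoC a) tau) (ZtoC b)) j)
            (Cdiv (Cmul eps z) j) (Cdiv (Cmul (Cconj eps) w) j)).

Definition zrange (n : nat) : list Z :=
  map (fun i => (Z.of_nat i - Z.of_nat n)%Z) (seq 0 (2 * n + 1)).

Definition box_sumC (g : nat -> Z -> Z -> Cx) (n : nat) : Cx :=
  fold_right Cadd C0 (map (fun l =>
    fold_right Cadd C0 (map (fun a =>
      fold_right Cadd C0 (map (fun b => g l a b) (zrange n))) (zrange n)))
  (seq 0 (S n))).
Definition box_sumR (g : nat -> Z -> Z -> R) (n : nat) : R :=
  fold_right Rplus 0 (map (fun l =>
    fold_right Rplus 0 (map (fun a =>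
      fold_right Rplus 0 (map (fun b => g l a b) (zrange n))) (zrange n)))
  (seq 0 (S n))).

(** term c(l,t) e[(l/nu) tau + conj(t) z + t w], restricted to nu N(t) <= l;
    t = (a + b omega)/sqrt(-D) runs over D^{-1} bijectively *)
Definition fterm (D : Z) (nu : nat) (cf : nat -> Cx -> Cx) (tau z w : Cx)
  (l : nat) (a b : Z) : Cx :=
  let t := t_of D a b in
  if Rle_dec (INR nu * Cnorm2 t) (INR l) then
    Cmul (cf l t)
         (ee (Cadd (Cadd (Cmul (RtoC (INR l / INR nu)) tau) (Cmul (Cconj t) z))
                   (Cmul t w)))
  else C0.

Definition has_expansion (D : Z) (nu : nat) (f : Cx -> Cx -> Cx -> Cx)
  (cf : nat -> Cx -> Cx) : Prop :=
  forall tau z w, upper tau ->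
    (exists B, forall n, box_sumR (fun l a b => Cabs (fterm D nu cf tau z w l a b)) n <= B) /\
    Cconv (box_sumC (fterm D nu cf tau z w)) (f tau z w).

Definition is_HJF (D : Z) (k N : nat) (phi : Cx -> Cx -> Cx -> Cx) : Prop :=
  holomorphic_HCC phi /\
  (* (a) *)
  (forall (eps : Cx) (a b c d : Z), is_unit D eps -> (a * d - b * c = 1)%Z ->
     (Z.of_nat N | c)%Z ->
     forall tau z w, upper tau -> slash k a b c d eps phi tau z w = phi tau z w) /\
  (* (b) *)
  (forall lam mu, in_O D lam -> in_O D mu ->
     forall tau z w, upper tau ->
       Cmul (ee (Cadd (Cadd (Cmul (RtoC (Cnorm2 lam)) tau) (Cmul (Cconj lam) z))
                      (Cmul lam w)))
            (phi tau (Cadd (Cadd z (Cmul lam tau)) mu)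
                     (Cadd (Cadd w (Cmul (Cconj lam) tau)) (Cconj mu)))
       = phi tau z w) /\
  (* (c) *)
  (forall a b c d : Z, (a * d - b * c = 1)%Z ->
     exists nu : nat, (0 < nu)%nat /\
       ((a = 1 /\ b = 0 /\ c = 0 /\ d = 1)%Z -> nu = 1%nat) /\
       exists cf : nat -> Cx -> Cx, has_expansion D nu (slash k a b c d C1 phi) cf).

Definition is_HJF_spez (D : Z) (k N : nat) (phi : Cx -> Cx -> Cx -> Cx) : Prop :=
  is_HJF D k N phi /\
  forall cf : nat -> Cx -> Cx, has_expansion D 1 phi cf ->
    forall (l1 l2 : nat) (t1 t2 : Cx), in_Ddual D t1 -> in_Ddual D t2 ->
      Cnorm2 t1 <= INR l1 -> Cnorm2 t2 <= INR l2 ->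
      INR l1 - Cnorm2 t1 = INR l2 - Cnorm2 t2 ->
      cf l1 t1 = cf l2 t2.

(* Main.v *)
Require Import Defs.
From Stdlib Require Import Reals ZArith Znumtheory List Lia Lra.
Open Scope R_scope.

Lemma Ceq (a b c d : R) : a = c -> b = d -> (a, b) = (c, d).
Proof. intros; subst; reflexivity. Qed.

Definition csum {A} (L : list A) (f : A -> Cx) : Cx := fold_right Cadd C0 (map f L).
Definition rsum {A} (L : list A) (f : A -> R) : R := fold_right Rplus 0 (map f L).

Ltac cx := repeat match goal with z : Cx |- _ => destruct z end;
  cbv [Cmul Cadd Copp Csub Cconj C0 Defs.C1 RtoC ZtoC Re Im fst snd csum rsum fold_right map] in *;
  apply Ceq.

Lemma Cmul_comm x y : Cmul x y = Cmul y x. Proof. cx; ring. Qed.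
Lemma Cmul_assoc x y z : Cmul x (Cmul y z) = Cmul (Cmul x y) z. Proof. cx; ring. Qed.
Lemma Cadd_comm x y : Cadd x y = Cadd y x. Proof. cx; ring. Qed.
Lemma Cadd_assoc x y z : Cadd x (Cadd y z) = Cadd (Cadd x y) z. Proof. cx; ring. Qed.
Lemma Cadd_0_l x : Cadd C0 x = x. Proof. destruct x; cx; ring. Qed.
Lemma Cadd_0_r x : Cadd x C0 = x. Proof. destruct x; cx; ring. Qed.
Lemma Cmul_1_l x : Cmul Defs.C1 x = x. Proof. destruct x; cx; ring. Qed.
Lemma Cmul_1_r x : Cmul x Defs.C1 = x. Proof. destruct x; cx; ring. Qed.
Lemma Cmul_0_l x : Cmul C0 x = C0. Proof. cx; ring. Qed.
Lemma Cmul_0_r x : Cmul x C0 = C0. Proof. cx; ring. Qed.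
Lemma Cmul_add_r x y z : Cmul x (Cadd y z) = Cadd (Cmul x y) (Cmul x z). Proof. cx; ring. Qed.
Lemma Cmul_add_l x y z : Cmul (Cadd y z) x = Cadd (Cmul y x) (Cmul z x). Proof. cx; ring. Qed.

Lemma ee_add x y : ee (Cadd x y) = Cmul (ee x) (ee y).
Proof.
  destruct x as [x1 x2], y as [y1 y2]. unfold ee, Cadd, Cmul, Re, Im; simpl.
  replace (-2 * PI * (x2 + y2)) with (-2*PI*x2 + -2*PI*y2) by ring.
  replace (2 * PI * (x1 + y1)) with (2*PI*x1 + 2*PI*y1) by ring.
  rewrite exp_plus, cos_plus, sin_plus. apply Ceq; ring.
Qed.

Lemma ee_ne0 x : ee x <> C0.
Proof.
  destruct x as [x1 x2]; unfold ee, C0, Re, Im; simpl. intro H. injection H as H1 H2.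
  pose proof (exp_pos (-2*PI*x2)).
  apply Rmult_integral in H1; apply Rmult_integral in H2.
  destruct H1; [lra|]. destruct H2; [lra|].
  pose proof (sin2_cos2 (2*PI*x1)) as HH. unfold Rsqr in *. rewrite H0, H1 in HH. lra.
Qed.

Lemma ee_0 : ee C0 = Defs.C1.
Proof. unfold ee, C0, Defs.C1, Re, Im; simpl. replace (-2*PI*0) with 0 by ring.
  replace (2*PI*0) with 0 by ring. rewrite exp_0, cos_0, sin_0. apply Ceq; ring. Qed.

Lemma ee_int (n : Z) : ee (IZR n, 0) = Defs.C1.
Proof.
  unfold ee, Defs.C1, Re, Im; simpl. replace (-2*PI*0) with 0 by ring. rewrite exp_0.
  assert (Hs : sin (PI * IZR n) = 0) by (apply sin_eq_0_1; exists n; ring).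
  replace (2 * PI * IZR n) with (2 * (PI * IZR n)) by ring.
  rewrite cos_2a_sin, sin_2a, Hs. apply Ceq; ring.
Qed.

Lemma ee_real_one (x : R) : ee (x, 0) = Defs.C1 -> exists k : Z, x = IZR k.
Proof.
  unfold ee, Defs.C1, Re, Im; simpl. replace (-2*PI*0) with 0 by ring. rewrite exp_0.
  intro H. injection H as H1 H2.
  replace (2*PI*x) with (2*(PI*x)) in H1 by ring. rewrite cos_2a_sin in H1.
  assert (sin (PI*x) * sin (PI*x) = 0) by lra.
  apply Rmult_integral in H. destruct H as [H|H];
  destruct (sin_eq_0_0 _ H) as [k Hk]; exists k; pose proof PI_RGT_0; nra.
Qed.


Lemma csum_nil {A} (f : A -> Cx) : csum nil f = C0. Proof. reflexivity. Qed.
Lemma csum_cons {A} (x : A) L f : csum (x :: L) f = Cadd (f x) (csum L f). Proof. reflexivity. Qed.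
Lemma rsum_cons {A} (x : A) L f : rsum (x :: L) f = f x + rsum L f. Proof. reflexivity. Qed.

Lemma csum_app {A} (L1 L2 : list A) f : csum (L1 ++ L2) f = Cadd (csum L1 f) (csum L2 f).
Proof. induction L1; simpl. now rewrite Cadd_0_l. unfold csum in *; simpl. rewrite IHL1. apply Cadd_assoc. Qed.
Lemma rsum_app {A} (L1 L2 : list A) f : rsum (L1 ++ L2) f = rsum L1 f + rsum L2 f.
Proof. induction L1; simpl. unfold rsum; simpl; ring. unfold rsum in *; simpl. rewrite IHL1. ring. Qed.

Lemma csum_ext {A} (L : list A) f g : (forall x, In x L -> f x = g x) -> csum L f = csum L g.
Proof. induction L; intros H; simpl. reflexivity. rewrite !csum_cons. rewrite H by (left; auto).
  rewrite IHL; auto. intros; apply H; right; auto. Qed.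
Lemma rsum_ext {A} (L : list A) f g : (forall x, In x L -> f x = g x) -> rsum L f = rsum L g.
Proof. induction L; intros H; simpl. reflexivity. rewrite !rsum_cons. rewrite H by (left; auto).
  rewrite IHL; auto. intros; apply H; right; auto. Qed.

Lemma csum_add {A} (L : list A) f g : csum L (fun x => Cadd (f x) (g x)) = Cadd (csum L f) (csum L g).
Proof. induction L. cx; ring. rewrite !csum_cons, IHL. cx; ring. Qed.
Lemma rsum_add {A} (L : list A) f g : rsum L (fun x => f x + g x) = rsum L f + rsum L g.
Proof. induction L. unfold rsum; simpl; ring. rewrite !rsum_cons, IHL. ring. Qed.
Lemma csum_scal {A} (L : list A) k f : Cmul k (csum L f) = csum L (fun x => Cmul k (f x)).
Proof. induction L. cx; ring. rewrite !csum_cons, <- IHL. apply Cmul_add_r. Qed.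
Lemma csum_zero {A} (L : list A) f : (forall x, In x L -> f x = C0) -> csum L f = C0.
Proof. intro H. rewrite (csum_ext L f (fun _ => C0)) by auto. clear H. induction L; auto.
  rewrite csum_cons, IHL. cx; ring. Qed.
Lemma csum_swap {A B} (L1 : list A) (L2 : list B) f :
  csum L1 (fun x => csum L2 (fun y => f x y)) = csum L2 (fun y => csum L1 (fun x => f x y)).
Proof. induction L1. rewrite csum_nil. symmetry; apply csum_zero; auto.
  rewrite csum_cons, IHL1. rewrite <- csum_add. apply csum_ext; intros; rewrite csum_cons; auto. Qed.

Lemma Re_csum {A} (L : list A) f : Re (csum L f) = rsum L (fun x => Re (f x)).
Proof. induction L. reflexivity. rewrite csum_cons, rsum_cons, <- IHL. reflexivity. Qed.
Lemma Im_csum {A} (L : list A) f : Im (csum L f) = rsum L (fun x => Im (f x)).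
Proof. induction L. reflexivity. rewrite csum_cons, rsum_cons, <- IHL. reflexivity. Qed.

Lemma rsum_le {A} (L : list A) f g : (forall x, In x L -> f x <= g x) -> rsum L f <= rsum L g.
Proof. induction L; intros H. unfold rsum; simpl; lra. rewrite !rsum_cons.
  assert (f a <= g a) by (apply H; left; auto). assert (rsum L f <= rsum L g) by (apply IHL; intros; apply H; right; auto). lra. Qed.
Lemma rsum_nonneg {A} (L : list A) f : (forall x, In x L -> 0 <= f x) -> 0 <= rsum L f.
Proof. intros H. replace 0 with (rsum L (fun _ => 0)). apply rsum_le; auto.
  induction L; auto. rewrite rsum_cons, IHL. ring. intros; apply H; right; auto. Qed.
Lemma rsum_abs {A} (L : list A) f : Rabs (rsum L f) <= rsum L (fun x => Rabs (f x)).
Proof. induction L. unfold rsum; simpl; rewrite Rabs_R0; lra. rewrite !rsum_cons.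
  eapply Rle_trans. apply Rabs_triang. lra. Qed.
Lemma rsum_sub_le {A} (L1 L2 L3 : list A) f : (forall x, In x (L1 ++ L2 ++ L3) -> 0 <= f x) ->
  rsum L2 f <= rsum (L1 ++ L2 ++ L3) f.
Proof. intros H. rewrite !rsum_app.
  assert (0 <= rsum L1 f) by (apply rsum_nonneg; intros; apply H; apply in_or_app; auto).
  assert (0 <= rsum L3 f) by (apply rsum_nonneg; intros; apply H; apply in_or_app; right; apply in_or_app; auto).
  lra. Qed.

Lemma Re_abs_le z : Rabs (Re z) <= Cabs z.
Proof. destruct z as [a b]; unfold Cabs, Cnorm2, Re, Im; simpl.
  rewrite <- sqrt_Rsqr_abs. apply sqrt_le_1_alt. unfold Rsqr; nra. Qed.
Lemma Im_abs_le z : Rabs (Im z) <= Cabs z.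
Proof. destruct z as [a b]; unfold Cabs, Cnorm2, Re, Im; simpl.
  rewrite <- sqrt_Rsqr_abs. apply sqrt_le_1_alt. unfold Rsqr; nra. Qed.
Lemma Cabs_nonneg z : 0 <= Cabs z. Proof. apply sqrt_pos. Qed.

Lemma Cmul_integral a b : Cmul a b = C0 -> a <> C0 -> b = C0.
Proof. destruct a as [a1 a2], b as [b1 b2]. unfold Cmul, C0, Re, Im; simpl. intros H Ha.
  injection H as H1 H2.
  assert (Hp : 0 < a1*a1 + a2*a2).
  { destruct (Req_dec a1 0); destruct (Req_dec a2 0); subst; try nra. exfalso; apply Ha; auto. }
  assert (E1 : (a1*a1+a2*a2) * b1 = 0) by (transitivity (a1*(a1*b1-a2*b2) + a2*(a1*b2+a2*b1)); [ring| rewrite H1,H2; ring]).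
  assert (E2 : (a1*a1+a2*a2) * b2 = 0) by (transitivity (a1*(a1*b2+a2*b1) - a2*(a1*b1-a2*b2)); [ring| rewrite H1,H2; ring]).
  apply Rmult_integral in E1; apply Rmult_integral in E2.
  destruct E1; [lra|]; destruct E2; [lra|]. subst; reflexivity. Qed.

Definition chs (M : nat) (n : Z) : Cx :=
  csum (seq 0 M) (fun j => ee (IZR n * INR j / INR M, 0)).

Lemma csum_const_one {A} (L : list A) : csum L (fun _ => Defs.C1) = RtoC (INR (length L)).
Proof. induction L. cx; simpl; ring. rewrite csum_cons, IHL. simpl length. rewrite S_INR. cx; ring. Qed.

Lemma chs_div M n : (0 < M)%nat -> (Z.of_nat M | n)%Z -> chs M n = RtoC (INR M).
Proof. intros HM [k Hk]. unfold chs.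
  rewrite (csum_ext _ _ (fun _ => Defs.C1)). rewrite csum_const_one, length_seq; auto.
  intros j _. subst n. replace (IZR (k * Z.of_nat M) * INR j / INR M) with (IZR (k * Z.of_nat j)).
  apply ee_int. rewrite !mult_IZR, <- !INR_IZR_INZ. field. apply not_0_INR; lia. Qed.

Lemma chs_ndiv M n : (0 < M)%nat -> ~ (Z.of_nat M | n)%Z -> chs M n = C0.
Proof. intros HM Hn. destruct M as [|M']; [lia|].
  set (r := ee (IZR n / INR (S M'), 0)).
  assert (Hr : Csub r Defs.C1 <> C0).
  { intro H. assert (r = Defs.C1). { revert H. unfold r; generalize (ee (IZR n / INR (S M'), 0)).
      intros c H. destruct c; unfold Csub, Cadd, Copp, C0, Defs.C1, Re, Im in *; simpl in *.
      injection H as H1 H2. apply Ceq; lra. }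
    destruct (ee_real_one _ H0) as [k Hk]. apply Hn. exists k.
    apply eq_IZR. rewrite mult_IZR, <- INR_IZR_INZ.
    assert (INR (S M') <> 0) by (apply not_0_INR; lia).
    rewrite <- Hk. field; auto. }
  apply (Cmul_integral (Csub r Defs.C1)); auto.
  assert (Hsh : Cmul r (chs (S M') n) = chs (S M') n).
  { unfold chs. rewrite csum_scal.
    transitivity (csum (seq 1 (S M')) (fun j => ee (IZR n * INR j / INR (S M'), 0))).
    { rewrite <- seq_shift. unfold csum. rewrite map_map. fold (csum (seq 0 (S M')) (fun x => ee (IZR n * INR (S x) / INR (S M'), 0))).
      apply csum_ext. intros j _. unfold r. rewrite <- ee_add. f_equal. unfold Cadd, Re, Im; cbn [fst snd].
      apply Ceq; [rewrite (S_INR j); field; apply not_0_INR; lia| ring]. }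
    rewrite seq_S. unfold chs. change (seq 0 (S M')) with (0%nat :: seq 1 M').
    rewrite csum_app, csum_cons, csum_cons, csum_nil, Cadd_0_r.
    replace (IZR n * INR (1 + M') / INR (S M')) with (IZR n).
    rewrite ee_int. replace (IZR n * INR 0 / INR (S M')) with 0 by (rewrite INR_0; field; apply not_0_INR; lia).
    change (0, 0) with C0. rewrite ee_0.
    generalize (csum (seq 1 M') (fun j : nat => ee (IZR n * INR j / INR (S M'), 0))). intro c. cx; ring.
    replace (1 + M')%nat with (S M') by lia. field. apply not_0_INR; lia. }
  revert Hsh. generalize (chs (S M') n). clearbody r. intros c H. transitivity (Csub (Cmul r c) c). clear H Hr; cx; ring. rewrite H. clear H; cx; ring.
Qed.

Lemma boxC_eq g n : box_sumC g n =
  csum (seq 0 (S n)) (fun l => csum (zrange n) (fun a => csum (zrange n) (fun b => g l a b))).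
Proof. reflexivity. Qed.
Lemma boxR_eq g n : box_sumR g n =
  rsum (seq 0 (S n)) (fun l => rsum (zrange n) (fun a => rsum (zrange n) (fun b => g l a b))).
Proof. reflexivity. Qed.

Lemma In_zrange n a : In a (zrange n) <-> (- Z.of_nat n <= a <= Z.of_nat n)%Z.
Proof. unfold zrange. rewrite in_map_iff. split.
  - intros [i [Hi Hin]]. apply in_seq in Hin. lia.
  - intros H. exists (Z.to_nat (a + Z.of_nat n)). split. lia. apply in_seq. lia. Qed.

Lemma NoDup_zrange n : NoDup (zrange n).
Proof. unfold zrange. apply NoDup_map_NoDup_ForallPairs; [|apply seq_NoDup].
  intros x y _ _ H. lia. Qed.

Lemma zrange_S n : zrange (S n) = (- Z.of_nat (S n))%Z :: zrange n ++ (Z.of_nat (S n) :: nil).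
Proof. unfold zrange. replace (2 * S n + 1)%nat with (S (S (2 * n + 1))) by lia.
  rewrite seq_S. simpl seq. simpl map. f_equal.
  change (Z.pos (Pos.of_succ_nat n)) with (Z.of_nat (S n)).
  rewrite map_app. simpl map. f_equal.
  - rewrite <- seq_shift, map_map. apply map_ext. intros; lia.
  - f_equal. change (Z.pos_sub ?p ?q) with (Z.pos p - Z.pos q)%Z. rewrite !Zpos_P_of_succ_nat. lia. Qed.

Lemma zrange_sub m d : exists A B, zrange (m + d) = A ++ zrange m ++ B.
Proof. induction d. exists nil, nil. rewrite app_nil_r, Nat.add_0_r; reflexivity.
  destruct IHd as [A [B H]]. replace (m + S d)%nat with (S (m + d)) by lia. rewrite zrange_S, H.
  eexists (_ :: A), (B ++ _). simpl. rewrite <- !app_assoc. reflexivity. Qed.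

Lemma seq_sub m d : seq 0 (S (m + d)) = seq 0 (S m) ++ seq (S m) d.
Proof. replace (S (m + d)) with (S m + d)%nat by lia. rewrite seq_app. reflexivity. Qed.

Definition inbox (m : nat) (l : nat) (a b : Z) : Prop :=
  (l <= m)%nat /\ (- Z.of_nat m <= a <= Z.of_nat m)%Z /\ (- Z.of_nat m <= b <= Z.of_nat m)%Z.

Lemma inbox_dec m l a b : {inbox m l a b} + {~ inbox m l a b}.
Proof. unfold inbox. destruct (le_dec l m); destruct (Z_le_dec (- Z.of_nat m) a);
  destruct (Z_le_dec a (Z.of_nat m)); destruct (Z_le_dec (- Z.of_nat m) b);
  destruct (Z_le_dec b (Z.of_nat m)); try (left; lia); right; lia. Qed.

Lemma rsum_sub_le' {A} (L1 L2 : list A) f : (forall x, In x L2 -> 0 <= f x) ->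
  (exists P Q, L2 = P ++ L1 ++ Q) -> rsum L1 f <= rsum L2 f.
Proof. intros H [P [Q E]]. subst. apply rsum_sub_le. auto. Qed.

Lemma boxR_mono g m n : (m <= n)%nat -> (forall l a b, 0 <= g l a b) ->
  box_sumR g m <= box_sumR g n.
Proof. intros Hmn Hg. replace n with (m + (n - m))%nat by lia. generalize (n - m)%nat as d. intro d.
  rewrite !boxR_eq. destruct (zrange_sub m d) as [A [B E]].
  apply Rle_trans with (rsum (seq 0 (S m)) (fun l => rsum (zrange (m+d)) (fun a => rsum (zrange (m+d)) (fun b => g l a b)))).
  - apply rsum_le. intros l _. apply Rle_trans with (rsum (zrange (m + d)) (fun a => rsum (zrange m) (fun b => g l a b))).
    + apply rsum_sub_le'. intros; apply rsum_nonneg; auto. eauto.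
    + apply rsum_le. intros. apply rsum_sub_le'; auto. eauto.
  - rewrite seq_sub. rewrite rsum_app. assert (0 <= rsum (seq (S m) d) (fun l => rsum (zrange (m + d)) (fun a => rsum (zrange (m + d)) (fun b => g l a b)))).
    apply rsum_nonneg; intros; apply rsum_nonneg; intros; apply rsum_nonneg; auto. lra. Qed.

Lemma boxR_add g1 g2 n : box_sumR (fun l a b => g1 l a b + g2 l a b) n = box_sumR g1 n + box_sumR g2 n.
Proof. rewrite !boxR_eq. rewrite <- rsum_add. apply rsum_ext; intros. rewrite <- rsum_add.
  apply rsum_ext; intros. apply rsum_add. Qed.

Lemma boxR_le g1 g2 n : (forall l a b, inbox n l a b -> g1 l a b <= g2 l a b) -> box_sumR g1 n <= box_sumR g2 n.
Proof. intros H. rewrite !boxR_eq. apply rsum_le. intros l Hl. apply rsum_le. intros a Ha. apply rsum_le. intros b Hb.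
  apply H. apply in_seq in Hl. apply In_zrange in Ha. apply In_zrange in Hb. unfold inbox; lia. Qed.

Lemma boxR_ext g1 g2 n : (forall l a b, inbox n l a b -> g1 l a b = g2 l a b) -> box_sumR g1 n = box_sumR g2 n.
Proof. intros H. apply Rle_antisym; apply boxR_le; intros; rewrite H; auto; lra. Qed.

Lemma boxR_nonneg g n : (forall l a b, 0 <= g l a b) -> 0 <= box_sumR g n.
Proof. intros. rewrite boxR_eq. repeat (apply rsum_nonneg; intros); auto. Qed.

Lemma Re_boxC g n : Re (box_sumC g n) = box_sumR (fun l a b => Re (g l a b)) n.
Proof. rewrite boxC_eq, boxR_eq, Re_csum. apply rsum_ext; intros. rewrite Re_csum.
  apply rsum_ext; intros. apply Re_csum. Qed.
Lemma Im_boxC g n : Im (box_sumC g n) = box_sumR (fun l a b => Im (g l a b)) n.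
Proof. rewrite boxC_eq, boxR_eq, Im_csum. apply rsum_ext; intros. rewrite Im_csum.
  apply rsum_ext; intros. apply Im_csum. Qed.

Lemma boxC_add g1 g2 n : box_sumC (fun l a b => Cadd (g1 l a b) (g2 l a b)) n = Cadd (box_sumC g1 n) (box_sumC g2 n).
Proof. rewrite !boxC_eq. rewrite <- csum_add. apply csum_ext; intros. rewrite <- csum_add.
  apply csum_ext; intros. apply csum_add. Qed.

Lemma boxC_ext g1 g2 n : (forall l a b, g1 l a b = g2 l a b) -> box_sumC g1 n = box_sumC g2 n.
Proof. intros H. rewrite !boxC_eq. apply csum_ext; intros; apply csum_ext; intros; apply csum_ext; intros; auto. Qed.

Lemma csum_single {A} (L : list A) f x0 : NoDup L -> In x0 L -> (forall x, In x L -> x <> x0 -> f x = C0) ->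
  csum L f = f x0.
Proof. induction L as [|y L IH]; intros Hnd Hin H. destruct Hin.
  inversion Hnd; subst. rewrite csum_cons. destruct Hin as [E|Hin].
  - subst. rewrite csum_zero. apply Cadd_0_r. intros x Hx. apply H. right; auto. intro; subst; auto.
  - rewrite IH; auto. rewrite H. apply Cadd_0_l. left; auto. intro; subst; auto.
    intros; apply H; auto; right; auto. Qed.

Lemma boxC_single g n l0 a0 b0 : inbox n l0 a0 b0 ->
  (forall l a b, (l, a, b) <> (l0, a0, b0) -> g l a b = C0) -> box_sumC g n = g l0 a0 b0.
Proof. intros Hin H. unfold inbox in Hin. rewrite boxC_eq.
  rewrite (csum_single _ _ l0); [|apply seq_NoDup| apply in_seq; lia|].
  rewrite (csum_single _ _ a0); [|apply NoDup_zrange| apply In_zrange; lia|].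
  apply (csum_single _ _ b0); [apply NoDup_zrange| apply In_zrange; lia|].
  intros b _ Hb. apply H. congruence.
  intros a _ Ha. apply csum_zero. intros b _. apply H. congruence.
  intros l _ Hl. apply csum_zero. intros a _. apply csum_zero. intros b _. apply H. congruence. Qed.

Lemma csum_boxC {A} (L : list A) g n :
  csum L (fun j => box_sumC (g j) n) = box_sumC (fun l a b => csum L (fun j => g j l a b)) n.
Proof. rewrite (csum_ext L _ (fun j => csum (seq 0 (S n)) (fun l => csum (zrange n) (fun a => csum (zrange n) (fun b => g j l a b))))) by (intros; apply boxC_eq).
  rewrite boxC_eq. rewrite csum_swap. apply csum_ext; intros l _.
  rewrite csum_swap. apply csum_ext; intros a _. apply csum_swap. Qed.

Lemma Cconv_ext u v L : (forall n, u n = v n) -> Cconv u L -> Cconv v L.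
Proof. intros H [H1 H2]. split; intros e He; [destruct (H1 e He) as [N HN]|destruct (H2 e He) as [N HN]];
  exists N; intros; rewrite <- H; auto. Qed.

Lemma Cconv_mul K u L : Cconv u L -> Cconv (fun n => Cmul K (u n)) (Cmul K L).
Proof. intros [H1 H2]. destruct K as [k1 k2]. unfold Cmul, Re, Im in *; simpl in *. split.
  - apply (CV_minus (fun n => k1 * fst (u n)) (fun n => k2 * snd (u n))).
    apply (CV_mult (fun _ => k1)); auto. intros e He; exists O; intros; unfold Rdist; rewrite Rminus_diag, Rabs_R0; auto.
    apply (CV_mult (fun _ => k2)); auto. intros e He; exists O; intros; unfold Rdist; rewrite Rminus_diag, Rabs_R0; auto.
  - apply (CV_plus (fun n => k1 * snd (u n)) (fun n => k2 * fst (u n))).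
    apply (CV_mult (fun _ => k1)); auto. intros e He; exists O; intros; unfold Rdist; rewrite Rminus_diag, Rabs_R0; auto.
    apply (CV_mult (fun _ => k2)); auto. intros e He; exists O; intros; unfold Rdist; rewrite Rminus_diag, Rabs_R0; auto. Qed.

Lemma Cconv_csum {A} (L : list A) u Ls : (forall x, In x L -> Cconv (u x) (Ls x)) ->
  Cconv (fun n => csum L (fun x => u x n)) (csum L Ls).
Proof. induction L as [|y L IH]; intros H.
  - split; intros e He; exists O; intros; unfold Rdist; simpl; rewrite Rminus_diag, Rabs_R0; auto.
  - destruct (H y (or_introl eq_refl)) as [A1 A2]. destruct IH as [B1 B2]. intros; apply H; right; auto.
    split.
    + apply (CV_plus (fun n => Re (u y n)) (fun n => Re (csum L (fun x => u x n)))); auto.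
    + apply (CV_plus (fun n => Im (u y n)) (fun n => Im (csum L (fun x => u x n)))); auto. Qed.

Lemma Cconv_unique u L1 L2 : Cconv u L1 -> Cconv u L2 -> L1 = L2.
Proof. intros [A1 A2] [B1 B2]. destruct L1, L2. apply Ceq; eapply UL_sequence; eauto. Qed.

Definition gz (D : Z) (u1 u2 : R) : Cx := (u1 + u2 * (- IZR D / 2), u2 * (sqrt (IZR D) / 2)).
Definition gw (D : Z) (u1 u2 : R) : Cx := Cconj (gz D u1 u2).

Lemma term_shift D cf tau z w l a b x u1 u2 : (0 < D)%Z ->
  fterm D 1 cf (Cadd tau (x, 0)) (Cadd z (gz D u1 u2)) (Cadd w (gw D u1 u2)) l a b =
  Cmul (fterm D 1 cf tau z w l a b) (ee (INR l * x + IZR b * u1 - IZR a * u2, 0)).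
Proof. intros HD. unfold fterm. destruct Rle_dec; [|symmetry; apply Cmul_0_l].
  rewrite <- Cmul_assoc, <- ee_add. f_equal. f_equal.
  assert (HD' : 0 < IZR D) by (apply IZR_lt; auto).
  unfold t_of, Cdiv, Cinv, sqrtmD, elt, omega, ZtoC, Cnorm2, gw, gz, RtoC.
  destruct tau as [t1 t2], z as [z1 z2], w as [w1 w2].
  cbv [Cmul Cadd Copp Csub Cconj C0 Defs.C1 RtoC ZtoC Re Im fst snd].
  assert (Hs := sqrt_sqrt _ (Rlt_le _ _ HD')). assert (Hp := sqrt_lt_R0 _ HD').
  set (s := sqrt (IZR D)) in *. clearbody s. rewrite <- Hs. simpl INR.
  apply Ceq; field; lra.
Qed.

Lemma csum_scal_r {A} (L : list A) k f : Cmul (csum L f) k = csum L (fun x => Cmul (f x) k).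
Proof. rewrite Cmul_comm, csum_scal. apply csum_ext; intros; apply Cmul_comm. Qed.

Definition grid3 (M : nat) (F : nat -> nat -> nat -> Cx) : Cx :=
  csum (seq 0 M) (fun j0 => csum (seq 0 M) (fun j1 => csum (seq 0 M) (fun j2 => F j0 j1 j2))).

Lemma grid_char M n0 n1 n2 :
  grid3 M (fun j0 j1 j2 => ee ((IZR n0 * INR j0 + IZR n1 * INR j1 + IZR n2 * INR j2) / INR M, 0)) =
  Cmul (chs M n0) (Cmul (chs M n1) (chs M n2)).
Proof. unfold grid3, chs. rewrite csum_scal_r. apply csum_ext; intros j0 _.
  rewrite csum_scal_r, csum_scal. apply csum_ext; intros j1 _.
  rewrite csum_scal, csum_scal. apply csum_ext; intros j2 _.
  rewrite <- !ee_add. f_equal. cx; unfold Rdiv; ring. Qed.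

Lemma boxC_scal k g n : Cmul k (box_sumC g n) = box_sumC (fun l a b => Cmul k (g l a b)) n.
Proof. rewrite !boxC_eq. rewrite csum_scal. apply csum_ext; intros. rewrite csum_scal.
  apply csum_ext; intros. apply csum_scal. Qed.

Lemma grid3_scal M k F : Cmul k (grid3 M F) = grid3 M (fun j0 j1 j2 => Cmul k (F j0 j1 j2)).
Proof. unfold grid3. rewrite csum_scal. apply csum_ext; intros. rewrite csum_scal.
  apply csum_ext; intros. apply csum_scal. Qed.

Lemma grid3_ext M F G : (forall j0 j1 j2, F j0 j1 j2 = G j0 j1 j2) -> grid3 M F = grid3 M G.
Proof. intros H; unfold grid3. apply csum_ext; intros; apply csum_ext; intros; apply csum_ext; intros; auto. Qed.

Lemma grid3_box M g n : grid3 M (fun j0 j1 j2 => box_sumC (g j0 j1 j2) n) =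
  box_sumC (fun l a b => grid3 M (fun j0 j1 j2 => g j0 j1 j2 l a b)) n.
Proof. unfold grid3. rewrite <- csum_boxC. apply csum_ext; intros.
  rewrite <- csum_boxC. apply csum_ext; intros. apply csum_boxC. Qed.

Lemma Cconv_grid3 M u Ls : (forall j0 j1 j2, Cconv (u j0 j1 j2) (Ls j0 j1 j2)) ->
  Cconv (fun n => grid3 M (fun j0 j1 j2 => u j0 j1 j2 n)) (grid3 M Ls).
Proof. intros H. unfold grid3. apply Cconv_csum; intros.
  apply (Cconv_csum _ (fun j1 n => csum (seq 0 M) (fun j2 => u x j1 j2 n))); intros.
  apply (Cconv_csum _ (fun j2 n => u x x0 j2 n)); intros. auto. Qed.

Definition gx (M j0 : nat) : R := INR j0 / INR M.
Definition gu (M : nat) (c0 c1 c2 : Z) (j0 j1 j2 : nat) : R :=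
  (IZR c0 * INR j0 + IZR c1 * INR j1 + IZR c2 * INR j2) / INR M.

Definition avgX (D : Z) (phi : Cx -> Cx -> Cx -> Cx) (tau z w : Cx) (p q al be ga de : Z)
  (l0 : nat) (a0 b0 : Z) (M : nat) : Cx :=
  Cmul (RtoC (/ (INR M ^ 3))) (grid3 M (fun j0 j1 j2 =>
    Cmul (ee (- (INR l0 * gx M j0 + IZR b0 * gu M p al be j0 j1 j2 - IZR a0 * gu M q ga de j0 j1 j2), 0))
         (phi (Cadd tau (gx M j0, 0)) (Cadd z (gz D (gu M p al be j0 j1 j2) (gu M q ga de j0 j1 j2)))
              (Cadd w (gw D (gu M p al be j0 j1 j2) (gu M q ga de j0 j1 j2)))))).

Definition nf0 (p q : Z) (l0 : nat) (a0 b0 : Z) (l : nat) (a b : Z) : Z :=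
  (Z.of_nat l - Z.of_nat l0 + p * (b - b0) - q * (a - a0))%Z.
Definition nf1 (al ga a0 b0 a b : Z) : Z := (al * (b - b0) - ga * (a - a0))%Z.

Definition chi (M : nat) (p q al be ga de : Z) (l0 : nat) (a0 b0 : Z) (l : nat) (a b : Z) : Cx :=
  Cmul (RtoC (/ (INR M ^ 3))) (Cmul (chs M (nf0 p q l0 a0 b0 l a b))
    (Cmul (chs M (nf1 al ga a0 b0 a b)) (chs M (nf1 be de a0 b0 a b)))).

Lemma avg_lim D cf phi tau z w p q al be ga de l0 a0 b0 M : (0 < D)%Z ->
  has_expansion D 1 phi cf -> upper tau ->
  Cconv (fun n => box_sumC (fun l a b => Cmul (fterm D 1 cf tau z w l a b)
                      (chi M p q al be ga de l0 a0 b0 l a b)) n)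
        (avgX D phi tau z w p q al be ga de l0 a0 b0 M).
Proof. intros HD Hexp Hup. unfold avgX.
  eapply Cconv_ext; [| apply Cconv_mul; apply Cconv_grid3; intros j0 j1 j2; apply Cconv_mul;
     apply Hexp; unfold upper in *; destruct tau; cbv [Cadd Re Im fst snd] in *; lra].
  intros n. cbv beta.
  rewrite (grid3_ext M _ (fun j0 j1 j2 => box_sumC (fun l a b =>
    Cmul (fterm D 1 cf tau z w l a b)
      (ee ((IZR (nf0 p q l0 a0 b0 l a b) * INR j0 + IZR (nf1 al ga a0 b0 a b) * INR j1
            + IZR (nf1 be de a0 b0 a b) * INR j2) / INR M, 0))) n)).
  - rewrite grid3_box, boxC_scal. apply boxC_ext. intros l a b.
    unfold chi. rewrite <- grid_char.
    rewrite <- (grid3_scal M (fterm D 1 cf tau z w l a b)).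
    rewrite !Cmul_assoc, (Cmul_comm (RtoC _) (fterm _ _ _ _ _ _ _ _ _)). reflexivity.
  - intros j0 j1 j2. rewrite boxC_scal. apply boxC_ext. intros l a b.
    rewrite term_shift by auto. rewrite Cmul_assoc, (Cmul_comm (ee _)), <- Cmul_assoc.
    f_equal. rewrite <- ee_add. f_equal.
    unfold gx, gu, nf0, nf1. cbv [Cadd Re Im fst snd].
    rewrite !minus_IZR, !plus_IZR, !mult_IZR, !minus_IZR. rewrite <- !INR_IZR_INZ. apply Ceq; unfold Rdiv; ring.
Qed.

Lemma boxR_abs g n : Rabs (box_sumR g n) <= box_sumR (fun l a b => Rabs (g l a b)) n.
Proof. rewrite !boxR_eq. eapply Rle_trans. apply rsum_abs. apply rsum_le; intros.
  eapply Rle_trans. apply rsum_abs. apply rsum_le; intros. apply rsum_abs. Qed.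

Lemma inbox_mono m n l a b : (m <= n)%nat -> inbox m l a b -> inbox n l a b.
Proof. unfold inbox; intros; lia. Qed.

Lemma stepB (f c : nat -> Z -> Z -> Cx) m n l0 a0 b0 :
  (forall l a b, c l a b = RtoC 1 \/ c l a b = C0) -> c l0 a0 b0 = RtoC 1 ->
  (forall l a b, inbox m l a b -> (l, a, b) <> (l0, a0, b0) -> c l a b = C0) ->
  inbox m l0 a0 b0 -> (m <= n)%nat ->
  Rabs (Re (box_sumC (fun l a b => Cmul (f l a b) (c l a b)) n) - Re (f l0 a0 b0)) <=
    box_sumR (fun l a b => Cabs (f l a b)) n - box_sumR (fun l a b => Cabs (f l a b)) m /\
  Rabs (Im (box_sumC (fun l a b => Cmul (f l a b) (c l a b)) n) - Im (f l0 a0 b0)) <=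
    box_sumR (fun l a b => Cabs (f l a b)) n - box_sumR (fun l a b => Cabs (f l a b)) m.
Proof. intros Hc Hc0 Hcm Hin Hmn.
  set (g1 := fun l a b => if inbox_dec m l a b then Cmul (f l a b) (c l a b) else C0).
  set (g2 := fun l a b => if inbox_dec m l a b then C0 else Cmul (f l a b) (c l a b)).
  assert (E : box_sumC (fun l a b => Cmul (f l a b) (c l a b)) n = Cadd (box_sumC g1 n) (box_sumC g2 n)).
  { rewrite <- boxC_add. apply boxC_ext; intros. unfold g1, g2. destruct inbox_dec.
    symmetry; apply Cadd_0_r. symmetry; apply Cadd_0_l. }
  assert (E1 : box_sumC g1 n = f l0 a0 b0).
  { rewrite (boxC_single _ _ l0 a0 b0). unfold g1. destruct inbox_dec; [|contradiction].
    rewrite Hc0. destruct (f l0 a0 b0); cx; ring. eapply inbox_mono; eauto.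
    intros l a b Hne. unfold g1. destruct inbox_dec. rewrite Hcm; auto. apply Cmul_0_r. auto. }
  set (h := fun l a b => if inbox_dec m l a b then 0 else Cabs (f l a b)).
  set (h' := fun l a b => if inbox_dec m l a b then Cabs (f l a b) else 0).
  assert (Hsum : box_sumR (fun l a b => Cabs (f l a b)) n = box_sumR h n + box_sumR h' n).
  { rewrite <- boxR_add. apply boxR_ext; intros. unfold h, h'. destruct inbox_dec; ring. }
  assert (Hh' : box_sumR (fun l a b => Cabs (f l a b)) m <= box_sumR h' n).
  { apply Rle_trans with (box_sumR h' m). apply Req_le. apply boxR_ext; intros.
    unfold h'; destruct inbox_dec; [reflexivity|contradiction]. apply boxR_mono; auto. intros; unfold h'; destruct inbox_dec; try lra; apply Cabs_nonneg. }
  assert (Hg2 : forall l a b, Rabs (Re (g2 l a b)) <= h l a b /\ Rabs (Im (g2 l a b)) <= h l a b).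
  { intros. unfold g2, h. destruct inbox_dec. cbv [C0 Re Im fst snd]; rewrite Rabs_R0; lra.
    destruct (Hc l a b) as [H|H]; rewrite H.
    - replace (Cmul (f l a b) (RtoC 1)) with (f l a b) by (destruct (f l a b); cx; ring).
      split; [apply Re_abs_le|apply Im_abs_le].
    - rewrite Cmul_0_r. cbv [C0 Re Im fst snd]; rewrite Rabs_R0; split; apply Cabs_nonneg. }
  rewrite E, E1. split.
  - replace (Re (Cadd (f l0 a0 b0) (box_sumC g2 n)) - Re (f l0 a0 b0)) with (Re (box_sumC g2 n))
      by (unfold Cadd, Re; simpl; ring).
    rewrite Re_boxC. eapply Rle_trans. apply boxR_abs.
    eapply Rle_trans. apply boxR_le. intros; apply (Hg2 l a b). lra.
  - replace (Im (Cadd (f l0 a0 b0) (box_sumC g2 n)) - Im (f l0 a0 b0)) with (Im (box_sumC g2 n))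
      by (unfold Cadd, Im; simpl; ring).
    rewrite Im_boxC. eapply Rle_trans. apply boxR_abs.
    eapply Rle_trans. apply boxR_le. intros; apply (Hg2 l a b). lra.
Qed.

Lemma lim_bound u L c E N : Un_cv u L -> (forall n, (N <= n)%nat -> Rabs (u n - c) <= E) -> Rabs (L - c) <= E.
Proof. intros Hu H. destruct (Rle_dec (Rabs (L - c)) E) as [|Hn]; auto. exfalso.
  set (e := Rabs (L - c) - E). assert (He : e > 0) by (unfold e; lra).
  destruct (Hu e He) as [N1 HN1]. specialize (HN1 (max N N1) ltac:(lia)). specialize (H (max N N1) ltac:(lia)).
  unfold Rdist in HN1. unfold e in HN1.
  assert (Rabs (L - c) <= Rabs (u (max N N1) - L) + Rabs (u (max N N1) - c)).
  { replace (L - c) with (-(u (max N N1) - L) + (u (max N N1) - c)) by ring.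
    eapply Rle_trans. apply Rabs_triang. rewrite Rabs_Ropp. lra. }
  lra. Qed.

Lemma chs_cases M n : (0 < M)%nat -> ((Z.of_nat M | n)%Z /\ chs M n = RtoC (INR M)) \/ (~ (Z.of_nat M | n)%Z /\ chs M n = C0).
Proof. intros HM. destruct (Zdivide_dec (Z.of_nat M) n). left; split; auto; apply chs_div; auto.
  right; split; auto; apply chs_ndiv; auto. Qed.

Lemma chi_cases M p q al be ga de l0 a0 b0 l a b : (0 < M)%nat ->
  ((Z.of_nat M | nf0 p q l0 a0 b0 l a b)%Z /\ (Z.of_nat M | nf1 al ga a0 b0 a b)%Z /\
   (Z.of_nat M | nf1 be de a0 b0 a b)%Z /\ chi M p q al be ga de l0 a0 b0 l a b = RtoC 1)
  \/ chi M p q al be ga de l0 a0 b0 l a b = C0.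
Proof. intros HM. unfold chi.
  assert (INR M <> 0) by (apply not_0_INR; lia).
  destruct (chs_cases M (nf0 p q l0 a0 b0 l a b) HM) as [[A1 A2]|[A1 A2]]; rewrite A2;
  [|right; cx; ring].
  destruct (chs_cases M (nf1 al ga a0 b0 a b) HM) as [[B1 B2]|[B1 B2]]; rewrite B2;
  [|right; cx; ring].
  destruct (chs_cases M (nf1 be de a0 b0 a b) HM) as [[C1 C2]|[C1 C2]]; rewrite C2;
  [|right; cx; ring].
  left. repeat split; auto. cx; field; auto. Qed.

Lemma chi_i0 M p q al be ga de l0 a0 b0 : (0 < M)%nat -> chi M p q al be ga de l0 a0 b0 l0 a0 b0 = RtoC 1.
Proof. intros HM. unfold chi, nf0, nf1.
  rewrite !chs_div; auto; try (exists 0%Z; ring).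
  assert (INR M <> 0) by (apply not_0_INR; lia). cx; field; auto. Qed.

Lemma Zdiv_small (M : nat) x : (Z.of_nat M | x)%Z -> (Z.abs x < Z.of_nat M)%Z -> x = 0%Z.
Proof. intros [k Hk] H. subst. destruct (Z.eq_dec k 0). subst; ring. exfalso.
  assert (Z.abs k >= 1)%Z by lia. rewrite Z.abs_mul in H. nia. Qed.

Lemma chi_zero M m p q al be ga de l0 a0 b0 l a b : (0 < M)%nat -> (al * de - be * ga = 1)%Z ->
  (2 * m < M)%nat -> inbox m l a b -> inbox m l0 a0 b0 -> (l, a, b) <> (l0, a0, b0) ->
  chi M p q al be ga de l0 a0 b0 l a b = C0.
Proof. intros HM Hdet Hm Hi Hi0 Hne.
  destruct (chi_cases M p q al be ga de l0 a0 b0 l a b HM) as [[H0 [H1 [H2 _]]]|]; auto.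
  exfalso. unfold nf0, nf1 in *.
  assert (Hb : (Z.of_nat M | b - b0)%Z).
  { replace (b - b0)%Z with (de * (al * (b - b0) - ga * (a - a0)) - ga * (be * (b - b0) - de * (a - a0)))%Z.
    apply Z.divide_sub_r; apply Z.divide_mul_r; auto.
    transitivity ((al * de - be * ga) * (b - b0))%Z. ring. rewrite Hdet; ring. }
  assert (Ha : (Z.of_nat M | a - a0)%Z).
  { replace (a - a0)%Z with (be * (al * (b - b0) - ga * (a - a0)) - al * (be * (b - b0) - de * (a - a0)))%Z.
    apply Z.divide_sub_r; apply Z.divide_mul_r; auto.
    transitivity ((al * de - be * ga) * (a - a0))%Z. ring. rewrite Hdet; ring. }
  unfold inbox in *.
  assert (Eb := Zdiv_small M _ Hb ltac:(lia)). assert (Ea := Zdiv_small M _ Ha ltac:(lia)).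
  assert (Hl : (Z.of_nat M | Z.of_nat l - Z.of_nat l0)%Z).
  { replace (Z.of_nat l - Z.of_nat l0)%Z with (Z.of_nat l - Z.of_nat l0 + p * (b - b0) - q * (a - a0))%Z.
    auto. rewrite Ea, Eb. ring. }
  assert (El := Zdiv_small M _ Hl ltac:(lia)).
  apply Hne. f_equal; [f_equal|]; lia. Qed.

Lemma lemmaX D cf phi tau z w p q al be ga de l0 a0 b0 : (0 < D)%Z ->
  has_expansion D 1 phi cf -> upper tau -> (al * de - be * ga = 1)%Z ->
  Cconv (avgX D phi tau z w p q al be ga de l0 a0 b0) (fterm D 1 cf tau z w l0 a0 b0).
Proof. intros HD Hexp Hup Hdet.
  set (f := fterm D 1 cf tau z w).
  set (U := fun n => box_sumR (fun l a b => Cabs (f l a b)) n).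
  assert (Hgrow : Un_growing U).
  { intro n. apply boxR_mono. lia. intros; apply Cabs_nonneg. }
  destruct (Hexp tau z w Hup) as [[B HB] _].
  destruct (growing_cv U Hgrow) as [S HS]. { exists B. intros x [n ->]. apply HB. }
  set (R0 := (l0 + Z.to_nat (Z.abs a0) + Z.to_nat (Z.abs b0))%nat).
  assert (Key : forall M, (2 * R0 + 1 <= M)%nat ->
    Rabs (Re (avgX D phi tau z w p q al be ga de l0 a0 b0 M) - Re (f l0 a0 b0)) <= S - U ((M - 1) / 2)%nat /\
    Rabs (Im (avgX D phi tau z w p q al be ga de l0 a0 b0 M) - Im (f l0 a0 b0)) <= S - U ((M - 1) / 2)%nat).
  { intros M HM. set (m := ((M - 1) / 2)%nat).
    assert (Hm1 : (2 * m < M)%nat) by (unfold m; pose proof (Nat.mul_div_le (M - 1) 2); lia).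
    assert (Hm2 : (R0 <= m)%nat) by (unfold m; apply Nat.div_le_lower_bound; lia).
    assert (Hi0 : inbox m l0 a0 b0) by (unfold inbox, R0 in *; lia).
    destruct (avg_lim D cf phi tau z w p q al be ga de l0 a0 b0 M HD Hexp Hup) as [C1 C2].
    assert (HB' : forall n, (m <= n)%nat ->
      Rabs (Re (box_sumC (fun l a b => Cmul (f l a b) (chi M p q al be ga de l0 a0 b0 l a b)) n) - Re (f l0 a0 b0)) <= S - U m /\
      Rabs (Im (box_sumC (fun l a b => Cmul (f l a b) (chi M p q al be ga de l0 a0 b0 l a b)) n) - Im (f l0 a0 b0)) <= S - U m).
    { intros n Hn. destruct (stepB f (chi M p q al be ga de l0 a0 b0) m n l0 a0 b0) as [A1 A2]; auto.
      - intros. destruct (chi_cases M p q al be ga de l0 a0 b0 l a b) as [[_ [_ [_ E]]]|E]; auto; lia.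
      - apply chi_i0; lia.
      - intros. apply chi_zero with m; auto; lia.
      - assert (U n <= S) by (apply growing_ineq; auto). fold (U n) (U m) in A1, A2. split; lra. }
    split; [apply (lim_bound _ _ _ _ m C1)|apply (lim_bound _ _ _ _ m C2)]; intros; apply HB'; auto. }
  split; intros e He; destruct (HS e He) as [N1 HN1];
  exists (2 * (N1 + R0) + 1)%nat; intros M HM; unfold Rdist;
  (assert (Hm : (N1 <= (M - 1) / 2)%nat) by (apply Nat.div_le_lower_bound; lia));
  (assert (Hm' : (2 * R0 + 1 <= M)%nat) by lia);
  specialize (HN1 _ Hm); unfold Rdist in HN1;
  assert (U ((M - 1) / 2)%nat <= S) by (apply growing_ineq; auto);
  destruct (Key M Hm') as [K1 K2]; rewrite Rabs_left1 in HN1 by lra; lra.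
Qed.

Lemma X_eq D cf phi tau z w p q al be ga de l0 a0 b0 tau' z' w' p' q' al' be' ga' de' l0' a0' b0' K :
  (0 < D)%Z -> has_expansion D 1 phi cf -> upper tau -> upper tau' ->
  (al * de - be * ga = 1)%Z -> (al' * de' - be' * ga' = 1)%Z ->
  (forall M j0 j1 j2,
     Cmul (ee (- (INR l0 * gx M j0 + IZR b0 * gu M p al be j0 j1 j2 - IZR a0 * gu M q ga de j0 j1 j2), 0))
         (phi (Cadd tau (gx M j0, 0)) (Cadd z (gz D (gu M p al be j0 j1 j2) (gu M q ga de j0 j1 j2)))
              (Cadd w (gw D (gu M p al be j0 j1 j2) (gu M q ga de j0 j1 j2)))) =
     Cmul K (Cmul (ee (- (INR l0' * gx M j0 + IZR b0' * gu M p' al' be' j0 j1 j2 - IZR a0' * gu M q' ga' de' j0 j1 j2), 0))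
         (phi (Cadd tau' (gx M j0, 0)) (Cadd z' (gz D (gu M p' al' be' j0 j1 j2) (gu M q' ga' de' j0 j1 j2)))
              (Cadd w' (gw D (gu M p' al' be' j0 j1 j2) (gu M q' ga' de' j0 j1 j2)))))) ->
  fterm D 1 cf tau z w l0 a0 b0 = Cmul K (fterm D 1 cf tau' z' w' l0' a0' b0').
Proof. intros HD Hexp Hup Hup' Hdet Hdet' H.
  apply (Cconv_unique (avgX D phi tau z w p q al be ga de l0 a0 b0)). apply lemmaX; auto.
  eapply Cconv_ext; [|apply Cconv_mul; apply (lemmaX D cf phi tau' z' w' p' q' al' be' ga' de' l0' a0' b0'); auto].
  intros M. unfold avgX. rewrite Cmul_assoc, (Cmul_comm K), <- Cmul_assoc. f_equal.
  rewrite grid3_scal. apply grid3_ext; intros. symmetry; apply H. Qed.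

Lemma Cmul_cancel_r a b e : e <> C0 -> Cmul a e = Cmul b e -> a = b.
Proof. intros He H. assert (Cmul e (Csub a b) = C0).
  { transitivity (Csub (Cmul a e) (Cmul b e)). cx; ring. rewrite H. cx; ring. }
  apply Cmul_integral in H0; auto. destruct a, b; cbv [Csub Cadd Copp C0 Re Im fst snd] in H0.
  injection H0 as E1 E2. apply Ceq; lra. Qed.

Lemma fterm_base0 D cf tau l a b : Cnorm2 (t_of D a b) <= INR l ->
  fterm D 1 cf tau C0 C0 l a b = Cmul (cf l (t_of D a b)) (ee (Cmul (RtoC (INR l)) tau)).
Proof. intros H. unfold fterm. destruct Rle_dec as [_|n]; [|exfalso; apply n; simpl INR; lra].
  f_equal. f_equal. generalize (t_of D a b); intro t. cx; simpl INR; field. Qed.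

Lemma sqrt_facts D : (0 < D)%Z -> sqrt (IZR D) * sqrt (IZR D) = IZR D /\ 0 < sqrt (IZR D).
Proof. intros HD. assert (0 < IZR D) by (apply IZR_lt; auto). split.
  apply sqrt_sqrt; lra. apply sqrt_lt_R0; auto. Qed.

Lemma norm_t D a b : (0 < D)%Z ->
  Cnorm2 (t_of D a b) * IZR D = IZR a * IZR a - IZR a * IZR b * IZR D + IZR b * IZR b * (IZR D * IZR D + IZR D) / 4.
Proof. intros HD. destruct (sqrt_facts D HD) as [Hs Hp].
  unfold t_of, Cdiv, Cinv, sqrtmD, elt, omega, ZtoC, Cnorm2.
  cbv [Cmul Cadd Copp Csub Cconj C0 Defs.C1 RtoC ZtoC Re Im fst snd].
  set (s := sqrt (IZR D)) in *. clearbody s. rewrite <- Hs. field. lra. Qed.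

Lemma Cpow_one k : Cpow Defs.C1 k = Defs.C1.
Proof. induction k; simpl; auto. rewrite IHk. apply Cmul_1_l. Qed.

Lemma Cdiv_one x : Cdiv x Defs.C1 = x.
Proof. destruct x; unfold Cdiv, Cinv, Cnorm2; cx; field. Qed.

Lemma slash_id k eps phi tau z w :
  slash k 1 0 0 1 eps phi tau z w = phi tau (Cmul eps z) (Cmul (Cconj eps) w).
Proof. unfold slash.
  replace (Cadd (Cmul (ZtoC 0) tau) (ZtoC 1)) with Defs.C1 by (cx; simpl; ring).
  rewrite Cpow_one, !Cdiv_one.
  replace (Cinv Defs.C1) with Defs.C1 by (unfold Cinv, Cnorm2; cx; field).
  replace (Copp (Cmul (Cmul (ZtoC 0) z) w)) with C0 by (cx; simpl; ring).
  rewrite ee_0, Cmul_1_l, Cmul_1_l. f_equal. destruct tau; cx; simpl; ring. Qed.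

Lemma unit_phi D k N phi eps tau z w : is_HJF D k N phi -> is_unit D eps -> upper tau ->
  phi tau (Cmul eps z) (Cmul (Cconj eps) w) = phi tau z w.
Proof. intros [_ [Ha _]] He Hu. rewrite <- (slash_id k). apply Ha; auto. exists 0%Z; ring. Qed.

Lemma unit_m1 D : is_unit D (-1, 0).
Proof. split; [|split].
  - unfold C0; intro H; injection H; lra.
  - exists (-1)%Z, 0%Z. unfold elt; cx; simpl; ring.
  - exists (-1)%Z, 0%Z. unfold elt, Cinv, Cnorm2; cx; simpl; field. Qed.

Lemma sqrt4 : sqrt (IZR 4) = 2.
Proof. replace (IZR 4) with (2 * 2) by (simpl; ring). apply sqrt_square; lra. Qed.

Lemma unit_i : is_unit 4 (0, 1).
Proof. split; [|split].
  - unfold C0; intro H; injection H; lra.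
  - exists 2%Z, 1%Z. unfold elt, omega. rewrite sqrt4. cx; simpl; field.
  - exists (-2)%Z, (-1)%Z. unfold elt, omega, Cinv, Cnorm2. rewrite sqrt4. cx; simpl; field. Qed.

Lemma ell_phi D k N phi lam tau z w : is_HJF D k N phi -> in_O D lam -> upper tau ->
  phi tau z w = Cmul (ee (Cadd (Cadd (Cmul (RtoC (Cnorm2 lam)) tau) (Cmul (Cconj lam) z)) (Cmul lam w)))
       (phi tau (Cadd z (Cmul lam tau)) (Cadd w (Cmul (Cconj lam) tau))).
Proof. intros [_ [_ [Hb _]]] Hl Hu. rewrite <- (Hb lam C0 Hl) at 1; auto.
  f_equal. f_equal; cx; ring.
  exists 0%Z, 0%Z. unfold elt; cx; simpl; ring. Qed.

Definition tau0 : Cx := (0, 1).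
Lemma upper_tau0 : upper tau0. Proof. unfold upper, tau0, Im; simpl; lra. Qed.
Lemma upper_shift x : upper (Cadd tau0 (x, 0)). Proof. unfold upper, tau0, Cadd, Im; simpl; lra. Qed.

Lemma norm_eq D a b a' b' : (0 < D)%Z ->
  IZR a * IZR a - IZR a * IZR b * IZR D + IZR b * IZR b * (IZR D * IZR D + IZR D) / 4 =
  IZR a' * IZR a' - IZR a' * IZR b' * IZR D + IZR b' * IZR b' * (IZR D * IZR D + IZR D) / 4 ->
  Cnorm2 (t_of D a b) = Cnorm2 (t_of D a' b').
Proof. intros HD H. assert (0 < IZR D) by (apply IZR_lt; auto).
  apply (Rmult_eq_reg_r (IZR D)); [|lra]. rewrite !norm_t; auto. Qed.

Lemma coef_from D cf l a b l' a' b' K : Cnorm2 (t_of D a b) <= INR l -> Cnorm2 (t_of D a' b') <= INR l' ->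
  fterm D 1 cf tau0 C0 C0 l a b = Cmul K (fterm D 1 cf tau0 C0 C0 l' a' b') ->
  ee (Cmul (RtoC (INR l)) tau0) = Cmul K (ee (Cmul (RtoC (INR l')) tau0)) ->
  cf l (t_of D a b) = cf l' (t_of D a' b').
Proof. intros H1 H2 H HK. rewrite !fterm_base0 in H by auto. rewrite HK in H.
  apply (Cmul_cancel_r _ _ (ee (Cmul (RtoC (INR l)) tau0))). apply ee_ne0.
  rewrite HK, H. generalize (cf l' (t_of D a' b')) (ee (Cmul (RtoC (INR l')) tau0)). intros. cx; ring. Qed.

Lemma SYM D k N phi cf l a b : (0 < D)%Z -> is_HJF D k N phi -> has_expansion D 1 phi cf ->
  Cnorm2 (t_of D a b) <= INR l -> cf l (t_of D a b) = cf l (t_of D (-a) (-b)).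
Proof. intros HD Hphi Hexp Hc.
  assert (Hn : Cnorm2 (t_of D (-a) (-b)) = Cnorm2 (t_of D a b)). apply norm_eq; auto. rewrite !opp_IZR. unfold Rdiv; ring.
  apply (coef_from D cf l a b l (-a) (-b) Defs.C1); auto. rewrite Hn; auto.
  2: symmetry; apply Cmul_1_l.
  apply (X_eq D cf phi tau0 C0 C0 0 0 1 0 0 1 l a b tau0 C0 C0 0 0 (-1) 0 0 (-1) l (-a) (-b)); auto;
    try apply upper_tau0.
  intros M j0 j1 j2. rewrite Cmul_1_l. f_equal.
  - f_equal. unfold gu. apply Ceq; [rewrite !opp_IZR; unfold Rdiv; ring|ring].
  - rewrite <- (unit_phi D k N phi (-1, 0)); auto; [|apply unit_m1|apply upper_shift].
    f_equal; unfold gw, gz, gu; cx; unfold Rdiv; ring.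
Qed.

Lemma UNI k N phi cf l a b : is_HJF 4 k N phi -> has_expansion 4 1 phi cf ->
  Cnorm2 (t_of 4 a b) <= INR l -> cf l (t_of 4 a b) = cf l (t_of 4 (2 * a - 5 * b) (a - 2 * b)).
Proof. intros Hphi Hexp Hc.
  assert (Hn : Cnorm2 (t_of 4 (2 * a - 5 * b) (a - 2 * b)) = Cnorm2 (t_of 4 a b)).
  { apply norm_eq. lia. rewrite !minus_IZR, !mult_IZR. field. }
  apply (coef_from 4 cf l a b l _ _ Defs.C1); auto. rewrite Hn; auto.
  2: symmetry; apply Cmul_1_l.
  apply (X_eq 4 cf phi tau0 C0 C0 0 0 1 0 0 1 l a b tau0 C0 C0 0 0 2 (-5) 1 (-2) l _ _); auto;
    try apply upper_tau0; try lia.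
  intros M j0 j1 j2. rewrite Cmul_1_l. f_equal.
  - f_equal. unfold gu. apply Ceq; [rewrite !minus_IZR, !mult_IZR; unfold Rdiv; ring|ring].
  - rewrite <- (unit_phi 4 k N phi (0, 1)); auto; [|apply unit_i|apply upper_shift].
    unfold gu. set (X := INR j0 / INR M). set (Y := INR j1 / INR M). set (Z := INR j2 / INR M).
    replace ((IZR 0 * INR j0 + IZR 1 * INR j1 + IZR 0 * INR j2) / INR M) with Y by (unfold Y, Rdiv; ring).
    replace ((IZR 0 * INR j0 + IZR 0 * INR j1 + IZR 1 * INR j2) / INR M) with Z by (unfold Z, Rdiv; ring).
    replace ((IZR 0 * INR j0 + IZR 2 * INR j1 + IZR (-5) * INR j2) / INR M) with (2 * Y - 5 * Z) by (unfold Y, Z, Rdiv; ring).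
    replace ((IZR 0 * INR j0 + IZR 1 * INR j1 + IZR (-2) * INR j2) / INR M) with (Y - 2 * Z) by (unfold Y, Z, Rdiv; ring).
    clearbody Y Z.
    f_equal; unfold gw, gz; rewrite sqrt4; cx; field.
Qed.

Lemma fterm_gen D cf tau z w l a b : Cnorm2 (t_of D a b) <= INR l ->
  fterm D 1 cf tau z w l a b = Cmul (cf l (t_of D a b))
    (ee (Cadd (Cadd (Cmul (RtoC (INR l)) tau) (Cmul (Cconj (t_of D a b)) z)) (Cmul (t_of D a b) w))).
Proof. intros H. unfold fterm. destruct Rle_dec as [_|n]; [|exfalso; apply n; simpl INR; lra].
  f_equal. f_equal. f_equal. f_equal. f_equal. unfold RtoC. f_equal. simpl INR. field. Qed.

Lemma coef_gen D cf tau z w l a b tau' z' w' l' a' b' K :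
  Cnorm2 (t_of D a b) <= INR l -> Cnorm2 (t_of D a' b') <= INR l' ->
  fterm D 1 cf tau z w l a b = Cmul K (fterm D 1 cf tau' z' w' l' a' b') ->
  ee (Cadd (Cadd (Cmul (RtoC (INR l)) tau) (Cmul (Cconj (t_of D a b)) z)) (Cmul (t_of D a b) w)) =
  Cmul K (ee (Cadd (Cadd (Cmul (RtoC (INR l')) tau') (Cmul (Cconj (t_of D a' b')) z')) (Cmul (t_of D a' b') w'))) ->
  cf l (t_of D a b) = cf l' (t_of D a' b').
Proof. intros H1 H2 H HK. rewrite !fterm_gen in H by auto. rewrite HK in H.
  eapply Cmul_cancel_r. apply ee_ne0.
  rewrite HK, H. generalize (cf l' (t_of D a' b')). intros. generalize (ee (Cadd (Cadd (Cmul (RtoC (INR l')) tau') (Cmul (Cconj (t_of D a' b')) z')) (Cmul (t_of D a' b') w'))). intros. cx; ring. Qed.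

Lemma ELL D k N phi cf H4 l0 a0 b0 p q l1 : (0 < D)%Z -> (4 * H4 = D * D + D)%Z ->
  is_HJF D k N phi -> has_expansion D 1 phi cf ->
  Z.of_nat l1 = (Z.of_nat l0 - (p * p - p * q * D + q * q * H4) - p * (b0 - 2 * p + q * D)
                  + q * (a0 - p * D + 2 * q * H4))%Z ->
  Cnorm2 (t_of D a0 b0) <= INR l0 ->
  Cnorm2 (t_of D (a0 - p * D + 2 * q * H4) (b0 - 2 * p + q * D)) <= INR l1 ->
  cf l0 (t_of D a0 b0) = cf l1 (t_of D (a0 - p * D + 2 * q * H4) (b0 - 2 * p + q * D)).
Proof. intros HD HH4 Hphi Hexp Hl Hc0 Hc1.
  set (lam := elt D p q).
  assert (HlO : in_O D lam) by (exists p, q; reflexivity).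
  set (K := ee (Cmul (RtoC (Cnorm2 lam)) tau0)).
  destruct (sqrt_facts D HD) as [Hs Hp].
  assert (HHr : IZR H4 = (IZR D * IZR D + IZR D) / 4).
  { apply (Rmult_eq_reg_l 4); [|lra]. replace (4 * ((IZR D * IZR D + IZR D) / 4)) with (IZR D * IZR D + IZR D) by field.
    rewrite <- mult_IZR, <- mult_IZR, <- plus_IZR. f_equal. exact HH4. }
  assert (Hlr : INR l1 = INR l0 - (IZR p * IZR p - IZR p * IZR q * IZR D + IZR q * IZR q * IZR H4)
      - IZR p * (IZR b0 - 2 * IZR p + IZR q * IZR D) + IZR q * (IZR a0 - IZR p * IZR D + 2 * IZR q * IZR H4)).
  { rewrite !INR_IZR_INZ, Hl. repeat rewrite ?plus_IZR, ?minus_IZR, ?mult_IZR. rewrite <- !INR_IZR_INZ. reflexivity. }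
  apply (coef_gen D cf tau0 C0 C0 l0 a0 b0 tau0 (Cmul lam tau0) (Cmul (Cconj lam) tau0) l1 _ _ K); auto.
  - apply (X_eq D cf phi tau0 C0 C0 0 0 1 0 0 1 l0 a0 b0 tau0 (Cmul lam tau0) (Cmul (Cconj lam) tau0)
                p q 1 0 0 1 l1 _ _ K); auto; try apply upper_tau0; try lia.
    intros M j0 j1 j2.
    rewrite (ell_phi D k N phi lam) by (auto; apply upper_shift).
    unfold gu, gx. set (X := INR j0 / INR M). set (Y := INR j1 / INR M). set (Z := INR j2 / INR M).
    replace ((IZR 0 * INR j0 + IZR 1 * INR j1 + IZR 0 * INR j2) / INR M) with Y by (unfold Y, Rdiv; ring).
    replace ((IZR 0 * INR j0 + IZR 0 * INR j1 + IZR 1 * INR j2) / INR M) with Z by (unfold Z, Rdiv; ring).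
    replace ((IZR p * INR j0 + IZR 1 * INR j1 + IZR 0 * INR j2) / INR M) with (IZR p * X + Y) by (unfold X, Y, Rdiv; ring).
    replace ((IZR q * INR j0 + IZR 0 * INR j1 + IZR 1 * INR j2) / INR M) with (IZR q * X + Z) by (unfold X, Z, Rdiv; ring).
    clearbody X Y Z.
    rewrite Cmul_assoc, Cmul_assoc. f_equal.
    + unfold K. rewrite <- !ee_add. f_equal.
      unfold lam, elt, omega, gw, gz, tau0, Cnorm2.
      cbv [Cmul Cadd Copp Csub Cconj C0 Defs.C1 RtoC ZtoC Re Im fst snd].
      rewrite Hlr. repeat rewrite ?plus_IZR, ?minus_IZR, ?mult_IZR. rewrite HHr.
      set (s := sqrt (IZR D)) in *. clearbody s. rewrite <- Hs. apply Ceq; field.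
    + f_equal; unfold lam, elt, omega, gw, gz, tau0;
      cbv [Cmul Cadd Copp Csub Cconj C0 Defs.C1 RtoC ZtoC Re Im fst snd];
      set (s := sqrt (IZR D)) in *; clearbody s; apply Ceq; field.
  - unfold K. rewrite <- ee_add. f_equal.
    unfold lam, t_of, Cdiv, Cinv, sqrtmD, elt, omega, tau0, Cnorm2.
    cbv [Cmul Cadd Copp Csub Cconj C0 Defs.C1 RtoC ZtoC Re Im fst snd].
    rewrite Hlr. repeat rewrite ?plus_IZR, ?minus_IZR, ?mult_IZR. rewrite HHr.
    set (s := sqrt (IZR D)) in *. clearbody s. rewrite <- Hs. apply Ceq; field; lra.
Qed.

Definition NQ (D H4 a b : Z) : Z := (a * a - a * b * D + b * b * H4)%Z.

Lemma normNQ D H4 a b : (0 < D)%Z -> (4 * H4 = D * D + D)%Z ->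
  Cnorm2 (t_of D a b) * IZR D = IZR (NQ D H4 a b).
Proof. intros HD HH. rewrite norm_t by auto. unfold NQ.
  assert (HHr : IZR H4 = (IZR D * IZR D + IZR D) / 4).
  { apply (Rmult_eq_reg_l 4); [|lra]. replace (4 * ((IZR D * IZR D + IZR D) / 4)) with (IZR D * IZR D + IZR D) by field.
    rewrite <- mult_IZR, <- mult_IZR, <- plus_IZR. f_equal. exact HH. }
  repeat rewrite ?plus_IZR, ?minus_IZR, ?mult_IZR. rewrite HHr. field. Qed.

Lemma step D k N phi cf H4 s p q l1 a1 b1 l2 a2 b2 : (0 < D)%Z -> (4 * H4 = D * D + D)%Z ->
  is_HJF D k N phi -> has_expansion D 1 phi cf -> (s = 1 \/ s = -1)%Z ->
  a2 = (s * a1 - p * D + 2 * q * H4)%Z -> b2 = (s * b1 - 2 * p + q * D)%Z ->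
  (D * Z.of_nat l1 - NQ D H4 a1 b1 = D * Z.of_nat l2 - NQ D H4 a2 b2)%Z ->
  Cnorm2 (t_of D a1 b1) <= INR l1 -> Cnorm2 (t_of D a2 b2) <= INR l2 ->
  cf l1 (t_of D a1 b1) = cf l2 (t_of D a2 b2).
Proof. intros HD HH Hphi Hexp Hs Ea Eb HZ H1 H2.
  assert (Hn : Cnorm2 (t_of D (s * a1) (s * b1)) = Cnorm2 (t_of D a1 b1)).
  { apply norm_eq; auto. destruct Hs; subst s; rewrite ?mult_IZR; try (unfold Rdiv; ring). }
  assert (Hsym : cf l1 (t_of D a1 b1) = cf l1 (t_of D (s * a1) (s * b1))).
  { destruct Hs; subst s. rewrite !Z.mul_1_l; auto.
    rewrite (SYM D k N phi cf l1 a1 b1) by auto. f_equal; ring. }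
  rewrite Hsym. subst a2 b2. apply (ELL D k N phi cf H4); auto.
  - apply (Z.mul_reg_l _ _ D). lia.
    assert (E : (NQ D H4 (s * a1 - p * D + 2 * q * H4) (s * b1 - 2 * p + q * D) - NQ D H4 (s * a1) (s * b1)
       + D * ((p * p - p * q * D + q * q * H4) + p * (s * b1 - 2 * p + q * D) - q * (s * a1 - p * D + 2 * q * H4)) = 0)%Z).
    { unfold NQ. transitivity ((4 * H4 - D * D - D) * (q * (s * a1) - p * (s * b1) + p * p - p * q * D + q * q * H4))%Z.
      ring. rewrite HH. ring. }
    assert (E2 : NQ D H4 (s * a1) (s * b1) = NQ D H4 a1 b1) by (unfold NQ; destruct Hs; subst s; ring).
    lia.
  - rewrite Hn; auto.
Qed.

Open Scope Z_scope.
Lemma classes8 (a1 b1 a2 b2 W : Z) : a1*a1 + 2*b1*b1 - a2*a2 - 2*b2*b2 = 8*W ->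
  exists s A B, (s = 1 \/ s = -1) /\ a2 - s*a1 = 4*A /\ b2 - s*b1 = 2*B.
Proof. intros H.
  pose proof (Z.div_mod a1 4 ltac:(lia)) as Ea1. pose proof (Z.mod_pos_bound a1 4 ltac:(lia)).
  pose proof (Z.div_mod a2 4 ltac:(lia)) as Ea2. pose proof (Z.mod_pos_bound a2 4 ltac:(lia)).
  pose proof (Z.div_mod b1 2 ltac:(lia)) as Eb1. pose proof (Z.mod_pos_bound b1 2 ltac:(lia)).
  pose proof (Z.div_mod b2 2 ltac:(lia)) as Eb2. pose proof (Z.mod_pos_bound b2 2 ltac:(lia)).
  revert H Ea1 Ea2 Eb1 Eb2 H0 H1 H2 H3.
  generalize (a1 / 4) (a1 mod 4) (a2 / 4) (a2 mod 4) (b1 / 2) (b1 mod 2) (b2 / 2) (b2 mod 2).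
  intros x1 r1 x2 r2 y1 t1 y2 t2 H -> -> -> -> Hr1 Hr2 Ht1 Ht2.
  assert (r1 = 0 \/ r1 = 1 \/ r1 = 2 \/ r1 = 3) as C1 by lia.
  assert (r2 = 0 \/ r2 = 1 \/ r2 = 2 \/ r2 = 3) as C2 by lia.
  assert (t1 = 0 \/ t1 = 1) as C3 by lia. assert (t2 = 0 \/ t2 = 1) as C4 by lia.
  destruct C1 as [ -> | [ -> | [ -> | -> ]]]; destruct C2 as [ -> | [ -> | [ -> | -> ]]];
  destruct C3 as [ -> | -> ]; destruct C4 as [ -> | -> ];
  first [ exists 1, (x2 - x1), (y2 - y1); split; [left; reflexivity| split; lia]
        | exists (-1), (x2 + x1), (y2 + y1); split; [right; reflexivity| split; lia]
        | exists (-1), (x2 + x1 + 1), (y2 + y1); split; [right; reflexivity| split; lia]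
        | exists (-1), (x2 + x1), (y2 + y1 + 1); split; [right; reflexivity| split; lia]
        | exists (-1), (x2 + x1 + 1), (y2 + y1 + 1); split; [right; reflexivity| split; lia]
        | exfalso; lia ].
Qed.

Lemma classes4 (a1 b1 a2 b2 W : Z) : a1*a1 + b1*b1 - a2*a2 - b2*b2 = 4*W ->
  (exists A B, a2 - a1 = 2*A /\ b2 - b1 = 2*B) \/ (exists A B, a2 - b1 = 2*A /\ b2 - a1 = 2*B).
Proof. intros H.
  pose proof (Z.div_mod a1 2 ltac:(lia)) as Ea1. pose proof (Z.mod_pos_bound a1 2 ltac:(lia)).
  pose proof (Z.div_mod a2 2 ltac:(lia)) as Ea2. pose proof (Z.mod_pos_bound a2 2 ltac:(lia)).
  pose proof (Z.div_mod b1 2 ltac:(lia)) as Eb1. pose proof (Z.mod_pos_bound b1 2 ltac:(lia)).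
  pose proof (Z.div_mod b2 2 ltac:(lia)) as Eb2. pose proof (Z.mod_pos_bound b2 2 ltac:(lia)).
  revert H Ea1 Ea2 Eb1 Eb2 H0 H1 H2 H3.
  generalize (a1 / 2) (a1 mod 2) (a2 / 2) (a2 mod 2) (b1 / 2) (b1 mod 2) (b2 / 2) (b2 mod 2).
  intros x1 r1 x2 r2 y1 t1 y2 t2 H -> -> -> -> Hr1 Hr2 Ht1 Ht2.
  assert (r1 = 0 \/ r1 = 1) as C1 by lia. assert (r2 = 0 \/ r2 = 1) as C2 by lia.
  assert (t1 = 0 \/ t1 = 1) as C3 by lia. assert (t2 = 0 \/ t2 = 1) as C4 by lia.
  destruct C1 as [ -> | -> ]; destruct C2 as [ -> | -> ];
  destruct C3 as [ -> | -> ]; destruct C4 as [ -> | -> ];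
  first [ left; exists (x2 - x1), (y2 - y1); split; lia
        | right; exists (x2 - y1), (y2 - x1); split; lia
        | right; exists (x2 - y1 + 1), (y2 - x1); split; lia
        | right; exists (x2 - y1), (y2 - x1 + 1); split; lia
        | right; exists (x2 - y1 + 1), (y2 - x1 + 1); split; lia
        | exfalso; lia ].
Qed.

Close Scope Z_scope.

Lemma HZ_of D H4 l1 l2 a1 b1 a2 b2 : (0 < D)%Z -> (4 * H4 = D * D + D)%Z ->
  (INR l1 - Cnorm2 (t_of D a1 b1) = INR l2 - Cnorm2 (t_of D a2 b2))%R ->
  (D * Z.of_nat l1 - NQ D H4 a1 b1 = D * Z.of_nat l2 - NQ D H4 a2 b2)%Z.
Proof. intros HD HH Heq. apply eq_IZR. rewrite !minus_IZR, !mult_IZR, <- !INR_IZR_INZ.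
  rewrite <- !(normNQ D H4) by auto.
  transitivity (IZR D * (INR l1 - Cnorm2 (t_of D a1 b1)))%R. ring. rewrite Heq. ring. Qed.

Lemma final D k N phi cf H4 l1 a1 b1 l2 a2 b2 : (0 < D)%Z -> (4 * H4 = D * D + D)%Z ->
  is_HJF D k N phi -> has_expansion D 1 phi cf ->
  (D * Z.of_nat l1 - NQ D H4 a1 b1 = D * Z.of_nat l2 - NQ D H4 a2 b2)%Z ->
  (Cnorm2 (t_of D a1 b1) <= INR l1)%R -> (Cnorm2 (t_of D a2 b2) <= INR l2)%R ->
  (D = 4 /\ H4 = 5 \/ D = 8 /\ H4 = 18 \/ (prime D /\ exists e, D = 4 * e + 3 /\ H4 = D * (e + 1)))%Z ->
  cf l1 (t_of D a1 b1) = cf l2 (t_of D a2 b2).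
Proof. intros HD HH Hphi Hexp HZ Hn1 Hn2 Hcase.
  destruct Hcase as [[-> ->]|[[-> ->]|[Hpr [e [ED EH]]]]].
  - unfold NQ in HZ.
    destruct (classes4 a1 b1 a2 b2 (Z.of_nat l1 - Z.of_nat l2 + a1 * b1 - a2 * b2 - b1 * b1 + b2 * b2)) as [[A [B [EA EB]]]|[A [B [EA EB]]]]; [lia| |].
    + apply (step 4 k N phi cf 5 1 (2 * A - 5 * B) (A - 2 * B)); auto; lia.
    + rewrite (UNI k N phi cf l1 a1 b1) by auto.
      apply (step 4 k N phi cf 5 1 (2 * (A - a1 + 3 * b1) - 5 * (B + b1)) (A - a1 + 3 * b1 - 2 * (B + b1))); auto; try lia.
      * unfold NQ. lia.
      * assert (Hn : Cnorm2 (t_of 4 (2 * a1 - 5 * b1) (a1 - 2 * b1)) = Cnorm2 (t_of 4 a1 b1)).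
        { apply norm_eq. lia. rewrite !minus_IZR, !mult_IZR. field. }
        rewrite Hn; auto.
  - unfold NQ in HZ.
    destruct (classes8 a1 b1 a2 b2 (Z.of_nat l1 - Z.of_nat l2 + a1 * b1 - a2 * b2 - 2 * b1 * b1 + 2 * b2 * b2)) as [s [A [B [Hs [EA EB]]]]]; [lia|].
    apply (step 8 k N phi cf 18 s (4 * A - 9 * B) (A - 2 * B)); auto; lia.
  - subst H4.
    assert (Hdiv : (D | (a2 - a1) * (a2 + a1))%Z).
    { exists (Z.of_nat l2 - Z.of_nat l1 + a2 * b2 - a1 * b1 - (b2 * b2 - b1 * b1) * (e + 1))%Z.
      unfold NQ in HZ. subst D. lia. }
    assert (Hs : exists s m, (s = 1 \/ s = -1)%Z /\ (a2 - s * a1 = D * m)%Z).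
    { destruct (prime_mult D Hpr _ _ Hdiv) as [[m Hm]|[m Hm]].
      - exists 1%Z, m. split. left; auto. lia.
      - exists (-1)%Z, m. split. right; auto. lia. }
    destruct Hs as [s [m [Hs Hm]]].
    apply (step D k N phi cf (D * (e + 1)) s (D * m - (2 * e + 2) * (b2 - s * b1)) (2 * m - (b2 - s * b1))); auto.
    + subst D. assert (a2 = s * a1 + (4 * e + 3) * m)%Z as -> by lia. ring.
    + subst D. ring.
Qed.

Theorem proposition2p7 (D : Z) (N k : nat)
  (hcl : class_number_one D)
  (hD : (D = 4 \/ D = 8 \/ (prime D /\ D mod 4 = 3))%Z)
  (hN : (1 <= N)%nat) (hk : (0 < k)%nat)
  (hunits : units_card_divides D k) :
  forall phi : Cx -> Cx -> Cx -> Cx, is_HJF_spez D k N phi <-> is_HJF D k N phi.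
Proof.
  intros phi. split; [intros [H _]; exact H|]. intros Hphi. split; [exact Hphi|].
  intros cf Hexp l1 l2 t1 t2 [x1 [[a1 [b1 Ex1]] Et1]] [x2 [[a2 [b2 Ex2]] Et2]] Hn1 Hn2 Heq.
  subst t1 t2 x1 x2. fold (t_of D a1 b1) (t_of D a2 b2) in *.
  destruct hD as [->|[->|[Hpr Hm]]].
  - apply (final 4 k N phi cf 5); auto; try lia. all: first [apply HZ_of; auto; lia | left; auto].
  - apply (final 8 k N phi cf 18); auto; try lia. all: first [apply HZ_of; auto; lia | right; left; auto].
  - assert (HD : (0 < D)%Z) by (destruct Hpr as [Hp1 _]; lia).
    pose proof (Z.div_mod D 4 ltac:(lia)) as ED. rewrite Hm in ED.
    assert (HH : (4 * (D * (D / 4 + 1)) = D * D + D)%Z) by (assert (E4 : (4 * (D / 4 + 1) = D + 1)%Z) by lia;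
       transitivity (D * (4 * (D / 4 + 1)))%Z; [ring| rewrite E4; ring]).
    apply (final D k N phi cf (D * (D / 4 + 1))); auto. apply HZ_of; auto.
    right; right. split; auto. exists (D / 4)%Z. split; auto.
Qed.
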